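(* With the notation of the context, suppose there are two sample points $\bm x_\alpha,\bm x_\beta$ such that $$\min_{j\in J_{\geq,\alpha}}u_j(\bm x_\beta)>u^*(\bm x_\beta)=u_\beta(\bm x_\beta).$$ Then there exists a point $\bm x_\gamma\in\mathcal{L}(\bm x_\alpha,\bm x_\beta)=\{\lambda\bm x_\alpha+(1-\lambda)\bm x_\beta:\lambda\in(0,1)\}$ and an affine local piece $u_\gamma$ of $u^*$ with $u^*(\bm x_\gamma)=u_\gamma(\bm x_\gamma)$ such that $$u_\gamma(\bm x_\alpha)\ge u_\alpha(\bm x_\alpha),\qquad u_\gamma(\bm x_\beta)\le u_\beta(\bm x_\beta).$$ Moreover, after adding $(\bm x_\gamma,u_\gamma)$ to the sample set (and recomputing $J_{\geq,\alpha}$ accordingly), $\min_{j\in J_{\geq,\alpha}}u_j(\bm x_\beta)\le u_\beta(\bm x_\beta)$.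
   Context: Let $\Omega\subseteq\mathbb{R}^{n_x}$ be a convex polyhedron and $u^*:\Omega\to\mathbb{R}$ a continuous piecewise affine (PWA) function: $\Omega$ is the union of finitely many closed convex polyhedra (local regions) with pairwise disjoint interiors, and on each local region $u^*$ coincides with an affine function (its local piece). Sample points $\bm x_1,\dots,\bm x_{N_s}\in\Omega$ are given, each lying in the interior of a unique order (UO) region $\Gamma(\bm x_i)$ (a closed polyhedron inside a local region on whose interior the order of all distinct local pieces of $u^*$ is constant), and $u_i$ denotes the local piece of $u^*$ on $\Gamma(\bm x_i)$, so $u_i(\bm x_i)=u^*(\bm x_i)$. Define $J_{\geq,i}=\{j: u_j(\bm x_i)\ge u_i(\bm x_i)\}$, where $j$ ranges over the indices of all current sample points. *)

(* Defs.v *)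
From mathcomp Require Import all_boot all_order all_algebra.
Set Implicit Arguments. Unset Strict Implicit. Unset Printing Implicit Defensive.
Import Order.TTheory GRing.Theory Num.Theory.
Local Open Scope ring_scope.

Section PWA.
Variables (R : realFieldType) (n : nat).

Definition dotv (a x : 'rV[R]_n) : R := \sum_(i < n) a 0 i * x 0 i.

(* An affine function x |-> <w,x> + c is represented by the pair (w, c). *)
Definition aff (p : 'rV[R]_n * R) (x : 'rV[R]_n) : R := dotv p.1 x + p.2.

(* A closed convex polyhedron given by finitely many halfspaces <a,x> <= b. *)
Definition in_poly (P : seq ('rV[R]_n * R)) (x : 'rV[R]_n) : bool :=
  all (fun h => dotv h.1 x <= h.2) P.

Definition interior_of (S : 'rV[R]_n -> Prop) (x : 'rV[R]_n) : Prop :=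
  exists2 e : R, 0 < e &
    forall y : 'rV[R]_n, (forall i, `|y 0 i - x 0 i| < e) -> S y.

Definition continuous_on (S : 'rV[R]_n -> Prop) (f : 'rV[R]_n -> R) : Prop :=
  forall x, S x -> forall e : R, 0 < e -> exists2 d : R, 0 < d &
    forall y, S y -> (forall i, `|y 0 i - x 0 i| < d) -> `|f y - f x| < e.

Definition is_PWA (Om : seq ('rV[R]_n * R)) (regions : seq (seq ('rV[R]_n * R)))
    (pieces : seq ('rV[R]_n * R)) (ustar : 'rV[R]_n -> R) : Prop :=
  [/\ size regions = size pieces,
      (forall x, in_poly Om x <->
         exists2 k, (k < size regions)%N & in_poly (nth [::] regions k) x),
      (forall k l, (k < size regions)%N -> (l < size regions)%N -> k <> l ->
         forall x, ~ (interior_of (in_poly (nth [::] regions k)) x /\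
                      interior_of (in_poly (nth [::] regions l)) x)),
      continuous_on (in_poly Om) ustar &
      (forall k, (k < size regions)%N -> forall x,
         in_poly (nth [::] regions k) x -> ustar x = aff (nth (0, 0) pieces k) x)].

(* Gam is a unique order (UO) region contained in the local region k, and
   u is the local piece of ustar on Gam (the piece of region k). *)
Definition UO_region_with_piece (regions : seq (seq ('rV[R]_n * R)))
    (pieces : seq ('rV[R]_n * R)) (Gam : seq ('rV[R]_n * R))
    (u : 'rV[R]_n * R) : Prop :=
  (exists k, [/\ (k < size regions)%N,
       (forall x, in_poly Gam x -> in_poly (nth [::] regions k) x) &
       u = nth (0, 0) pieces k]) /\
  (forall p q, p \in pieces -> q \in pieces -> forall x y,
     interior_of (in_poly Gam) x -> interior_of (in_poly Gam) y ->
     Num.sg (aff p x - aff q x) = Num.sg (aff p y - aff q y)).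

Definition Jge (N : nat) (xs : 'I_N -> 'rV[R]_n) (us : 'I_N -> 'rV[R]_n * R)
    (i : 'I_N) : {set 'I_N} :=
  [set j | aff (us i) (xs i) <= aff (us j) (xs i)].

End PWA.

(* Extending a sample family indexed by 'I_N by a new last element t. *)
Definition ext_fun (T : Type) (N : nat) (f : 'I_N -> T) (t : T) : 'I_N.+1 -> T :=
  fun i => if unlift ord_max i is Some j then f j else t.

(* Main.v *)
Require Import Defs.
From mathcomp Require Import all_boot all_order all_algebra.
From mathcomp Require Import ring lra.
Import Order.TTheory GRing.Theory Num.Theory.
Local Open Scope ring_scope.

Lemma argmax_seq (R : realFieldType) (s : seq R) (Q : pred R) (f : R -> R) :
  has Q s -> exists2 x, x \in s & Q x /\ (forall y, y \in s -> Q y -> f y <= f x).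
Proof.
elim: s => //= a s IH.
case Qa: (Q a) => /=.
- case Hs: (has Q s).
  + case: (IH Hs) => x xs [Qx Hx].
    have [h|h] := leP (f a) (f x).
    * exists x; first by rewrite inE xs orbT.
      split=> // y; rewrite inE => /orP [/eqP -> //|ys Qy]; exact: Hx.
    * exists a; first by rewrite inE eqxx.
      split=> // y; rewrite inE => /orP [/eqP -> //|ys Qy].
      apply: le_trans (Hx y ys Qy) _; exact: ltW.
  + move=> _; exists a; first by rewrite inE eqxx.
    split=> // y; rewrite inE => /orP [/eqP -> //|ys Qy].
    by move/hasPn: Hs => /(_ y ys); rewrite Qy.
- move=> Hs; case: (IH Hs) => x xs [Qx Hx].
  exists x; first by rewrite inE xs orbT.
  split=> // y; rewrite inE => /orP [/eqP -> |ys Qy]; first by rewrite Qa.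
  exact: Hx.
Qed.

Lemma dotv_seg (R : realFieldType) (n : nat) (a x y : 'rV[R]_n) t :
  dotv a (t *: x + (1 - t) *: y) = t * dotv a x + (1 - t) * dotv a y.
Proof.
rewrite /dotv !mulr_sumr -big_split; apply: eq_bigr => i _; rewrite !mxE /=; ring.
Qed.

Lemma aff_seg (R : realFieldType) (n : nat) (u : 'rV[R]_n * R) x y t :
  aff u (t *: x + (1 - t) *: y) = t * aff u x + (1 - t) * aff u y.
Proof. rewrite /aff dotv_seg; ring. Qed.

Lemma seg_in_poly (R : realFieldType) (n : nat) (P : seq ('rV[R]_n * R)) x y t :
  0 <= t <= 1 -> in_poly P x -> in_poly P y -> in_poly P (t *: x + (1 - t) *: y).
Proof.
move=> /andP [t0 t1] /allP Hx /allP Hy; apply/allP => h hin.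
have := Hx h hin; have := Hy h hin; rewrite dotv_seg => /= hy hx.
nra.
Qed.

Theorem mainTheorem2 (R : realFieldType) (n : nat)
    (Om : seq ('rV[R]_n * R)) (regions : seq (seq ('rV[R]_n * R)))
    (pieces : seq ('rV[R]_n * R)) (ustar : 'rV[R]_n -> R)
    (Ns : nat) (xs : 'I_Ns -> 'rV[R]_n) (Gam : 'I_Ns -> seq ('rV[R]_n * R))
    (us : 'I_Ns -> 'rV[R]_n * R) (alpha beta : 'I_Ns) :
  is_PWA Om regions pieces ustar ->
  (forall i, in_poly Om (xs i)) ->
  (forall i, UO_region_with_piece regions pieces (Gam i) (us i) /\
             interior_of (in_poly (Gam i)) (xs i)) ->
  (forall j, j \in Jge xs us alpha -> ustar (xs beta) < aff (us j) (xs beta)) ->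
  ustar (xs beta) = aff (us beta) (xs beta) ->
  exists (lam : R) (xg : 'rV[R]_n) (ug : 'rV[R]_n * R),
    (0 < lam < 1) /\
    xg = lam *: xs alpha + (1 - lam) *: xs beta /\
    ug \in pieces /\
    ustar xg = aff ug xg /\
    aff (us alpha) (xs alpha) <= aff ug (xs alpha) /\
    aff ug (xs beta) <= aff (us beta) (xs beta) /\
    (let xs' := ext_fun xs xg in
     let us' := ext_fun us ug in
     exists2 j, j \in Jge xs' us' (lift ord_max alpha) &
       aff (us' j) (xs' (lift ord_max beta))
         <= aff (us' (lift ord_max beta)) (xs' (lift ord_max beta))).
Proof.
move=> [Hsz Hcov Hdisj Hcont Hpw] HOm HUO HJ Hbeta.
have Halpha : ustar (xs beta) < aff (us alpha) (xs beta).
  by apply: HJ; rewrite inE lexx.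
have [[[ka [kalt Hsub Hua]] _] [e e0 He]] := HUO alpha.
have Hxa_in : in_poly (nth [::] regions ka) (xs alpha).
  by apply: Hsub; apply: He => i; rewrite subrr normr0.
have HB : ustar (xs alpha) = aff (us alpha) (xs alpha) by rewrite Hua; apply: Hpw.
set xa := xs alpha in Halpha Hxa_in HB He *.
set xb := xs beta in Halpha Hbeta *.
pose p t := t *: xa + (1 - t) *: xb.
have p1 : p 1 = xa by rewrite /p subrr scale0r addr0 scale1r.
have p0E : p 0 = xb by rewrite /p subr0 scale0r add0r scale1r.
pose A := ustar xb.
pose phi0 (h : 'rV[R]_n * R) := dotv h.1 xb - h.2.
pose phi1 (h : 'rV[R]_n * R) := dotv h.1 xa - h.2.
pose root h := - phi0 h / (phi1 h - phi0 h).
have phiE : forall h t, dotv h.1 (p t) - h.2 = phi0 h + t * (phi1 h - phi0 h).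
  by move=> h t; rewrite /p dotv_seg /phi0 /phi1; ring.
pose P := 1 :: [seq root h | h <- flatten regions].
pose r0 t := (ustar (p t) - A) / t.
have [lam lamP [/andP [lam0 lam1] Hmax]] :=
  @argmax_seq R P (fun t => (0 < t) && (t <= 1)) r0
    (ltac:(by rewrite /= ltr01 lexx)).
have [p0 p0P [/andP [p00 p0lt] Hmax0]] :=
  @argmax_seq R (0 :: P) (fun t => (0 <= t) && (t < lam)) id
    (ltac:(by rewrite /= lexx lam0)).
have noroot : forall rho, rho \in P -> p0 < rho -> rho < lam -> False.
  move=> rho rP h1 h2.
  have := Hmax0 rho (ltac:(by rewrite inE rP orbT)).
  rewrite /= h2 andbT (le_trans p00 (ltW h1)) => /(_ isT) /=.
  by rewrite leNgt h1.
pose t' := (p0 + lam) / 2.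
have t'0 : p0 < t' by rewrite /t'; lra.
have t'1 : t' < lam by rewrite /t'; lra.
have Ht'Om : in_poly Om (p t').
  by apply: seg_in_poly; [apply/andP; split; lra | apply: HOm | apply: HOm].
have [k klt Hk] := (Hcov (p t')).1 Ht'Om.
set rk := nth [::] regions k in Hk.
have Hreg : forall t, p0 <= t <= lam -> in_poly rk (p t).
  move=> t /andP [ta tb]; apply/allP => h hin.
  have := allP Hk h hin.
  have rootP : root h \in P.
    rewrite inE; apply/orP; right; apply/mapP; exists h => //.
    apply/flattenP; exists rk => //; exact: mem_nth.
  rewrite -subr_le0 phiE => H1; rewrite -subr_le0 phiE.
  set a0 := phi0 h in rootP H1 *; set d := phi1 h - phi0 h in rootP H1 *.
  have rootE : root h = - a0 / d by [].
  have E1 : a0 + lam * d <= 0.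
    rewrite leNgt; apply/negP => H2.
    have d0 : 0 < d by nra.
    have hr : root h * d = - a0 by rewrite rootE divfK // gt_eqF.
    apply: (noroot (root h)) => //; nra.
  have E2 : a0 + p0 * d <= 0.
    rewrite leNgt; apply/negP => H2.
    have d0 : d < 0 by nra.
    have hr : root h * d = - a0 by rewrite rootE divfK // lt_eqF.
    apply: (noroot (root h)) => //; nra.
  have [dd|dd] := leP 0 d; nra.
pose u := nth (0, 0) pieces k.
have Hg : forall t, p0 <= t <= lam ->
    ustar (p t) = t * aff u xa + (1 - t) * aff u xb.
  move=> t ht; rewrite (Hpw k klt); last exact: Hreg.
  by rewrite /p aff_seg.
set F0 := aff u xb in Hg *. set F1 := aff u xa in Hg *.
have gl := Hg lam (ltac:(by rewrite lexx (ltW p0lt))).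
have gp0 := Hg p0 (ltac:(by rewrite lexx (ltW p0lt))).
have HF0 : F0 <= A.
  have [/eqP pz|pnz] := boolP (p0 == 0).
    by move: gp0; rewrite pz p0E /A => ->; lra.
  have p0pos : 0 < p0 by rewrite lt_neqAle eq_sym pnz.
  have p0inP : p0 \in P by move: p0P; rewrite inE (negPf pnz).
  have := Hmax p0 p0inP; rewrite p0pos /= (le_trans (ltW p0lt) lam1) => /(_ isT).
  rewrite /r0 ler_pdivrMr // mulrAC ler_pdivlMr // gl gp0.
  nra.
have lamlt1 : lam < 1.
  rewrite lt_neqAle lam1 andbT; apply/negP => /eqP lam1E.
  pose M := \sum_(i < n) `|xb 0 i - xa 0 i|.
  have M0 : 0 <= M by apply: sumr_ge0 => i _.
  have Mi : forall i, `|xb 0 i - xa 0 i| <= M.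
    move=> i; rewrite /M (bigD1 i) //=.
    have : 0 <= \sum_(j < n | j != i) `|xb 0 j - xa 0 j| by apply: sumr_ge0.
    lra.
  pose c := e / (1 + e + M).
  have cE : c * (1 + e + M) = e by rewrite divfK // gt_eqF //; lra.
  have c0 : 0 < c by rewrite divr_gt0 //; lra.
  have c1 : c < 1.
    have : c * (1 + M) > 0 by apply: mulr_gt0 => //; lra.
    have : e * (1 - c) = c * (1 + M) by rewrite mulrBr mulr1 -{1}cE; ring.
    move=> H1 H2; rewrite -subr_gt0; rewrite -H1 in H2; move: H2.
    by rewrite pmulr_rgt0.
  have cM : c * M < e.
    have : 0 < c * (1 + e) by apply: mulr_gt0 => //; lra.
    have : c * M = e - c * (1 + e) by rewrite -{1}cE; ring.
    lra.
  pose ts := 1 - (1 - t') * c.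
  have q1 : (1 - t') * c <= 1 - t'.
    rewrite -{2}(mulr1 (1 - t')); apply: ler_wpM2l; [lra | exact: ltW].
  have q2 : 0 < (1 - t') * c by apply: mulr_gt0 => //; lra.
  have ts0 : p0 <= ts <= lam by rewrite lam1E /ts; apply/andP; split; lra.
  have ts1 : ts < 1 by rewrite /ts; lra.
  have HsG : in_poly (Gam alpha) (p ts).
    apply: He => i; rewrite /p !mxE.
    have -> : ts * xa 0 i + (1 - ts) * xb 0 i - xa 0 i
               = (1 - ts) * (xb 0 i - xa 0 i) by ring.
    rewrite normrM ger0_norm; last lra.
    set D := `|xb 0 i - xa 0 i|.
    have D0 : 0 <= D by apply: normr_ge0.
    have h1 : c * D <= c * M by apply: ler_wpM2l; [exact: ltW | exact: Mi].
    have h2 : (1 - t') * (c * D) <= c * D.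
      have : 0 <= c * D by apply: mulr_ge0 => //; apply: ltW.
      have : 0 <= t' by lra.
      nra.
    have -> : (1 - ts) * D = (1 - t') * (c * D) by rewrite /ts; ring.
    lra.
  have E1 : ustar (p ts) = aff (us alpha) (p ts) by rewrite Hua; apply: Hpw => //; apply: Hsub.
  rewrite /p aff_seg -/(p ts) (Hg ts ts0) in E1.
  move: gl; rewrite lam1E p1 HB => gl.
  have : F1 = aff (us alpha) xa by rewrite gl; ring.
  move=> hF.
  have h3 : (1 - ts) * (F0 - aff (us alpha) xb) = 0.
    by rewrite mulrBr; move: E1; rewrite hF => E1; lra.
  move/eqP: h3; rewrite mulf_eq0 => /orP [/eqP|/eqP]; first by lra.
  by move: HF0 Halpha; rewrite /A; lra.
have HF1 : aff (us alpha) xa <= F1.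
  have := Hmax 1 (ltac:(by rewrite inE eqxx)) (ltac:(by rewrite ltr01 lexx)).
  rewrite /r0 p1 divr1 ler_pdivlMr // gl HB.
  move: HF0; rewrite /A => HF0 H.
  have h4 : 0 <= (1 - lam) * (ustar xb - F0) by apply: mulr_ge0; lra.
  have h5 : 0 <= lam * (F1 - aff (us alpha) xa).
    have -> : lam * (F1 - aff (us alpha) xa) =
      ((lam * F1 + (1 - lam) * F0 - ustar xb) - (aff (us alpha) xa - ustar xb) * lam)
      + (1 - lam) * (ustar xb - F0) by ring.
    apply: addr_ge0; last exact: h4.
    by rewrite subr_ge0; exact: H.
  by rewrite -subr_ge0 -(pmulr_rge0 _ lam0).
exists lam, (p lam), u.
split; first by rewrite lam0 lamlt1.
split; first by [].
split; first by apply: mem_nth; rewrite -Hsz.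
split; first by rewrite (Hpw k klt) //; apply: Hreg; rewrite lexx (ltW p0lt).
split; first exact: HF1.
split; first by rewrite -Hbeta; exact: HF0.
rewrite /=; exists ord_max; rewrite ?inE /ext_fun ?unlift_none ?liftK //.
by rewrite -Hbeta.
Qed.
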